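(* Let $G=\langle A\cup B\rangle$ be a CS group, let $g=({}^{a_0}b_0)\cdots({}^{a_{n-1}}b_{n-1})a_n\in G$ with $a_i\in A$, $b_i\in B$, and let $x\in X$ with $\ell:=\ell_g(x)<\infty$ such that $n=\mathrm{syl}(g\|_x)=\mathrm{syl}(g)$. Then for every $i\in\{0,\dots,n-1\}$ we have $a_i^{-1}a_na_i\in\mathfrak C(a_n,x)$, and there are integers $j(i)$ ($i=0,\dots,n-1$) such that $$g\|_x=\prod_{j=0}^{\ell-1}\ \prod_{i=0}^{n-1} b_i\big|_{0.(a_i^{-1}a_n^{\,j+j(i)}a_i)},$$ where the outer product is ordered by increasing $j$ and the inner one by increasing $i$.
   Context: Let $X$ be a nonempty set (possibly infinite) with distinguished letter $0$, $\dot X=X\setminus\{0\}$. $X^*$ is the free monoid on $X$ (concatenation $\star$) viewed as a rooted tree; $\mathrm{Aut}(X^* )$ acts on the right ($v\mapsto v.g$; $gh$ = first $g$ then $h$); ${}^hg=hgh^{-1}$; sections $g|_u$ are defined by $(u\star v).g=u.g\star v.(g|_u)$; elements of $\mathrm{Sym}(X)$ are identified with rooted automorphisms $(x\star v).\rho=x.\rho\star v$; $\mathrm{St}(1)$ is the first layer stabiliser. $\ell_g(v)$ is the length of the $\langle g\rangle$-orbit of $v$, and $g\|_v:=g^{\ell_g(v)}|_v$ when finite. A constant spinal (CS) group is $G=\langle A\cup B\rangle$ with $A\le\mathrm{Sym}(X)$ transitive and $B\le\mathrm{St}(1)$ such that $b|_0=b$ for all $b\in B$ and the elements $b|_x$ ($b\in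 B$, $x\in\dot X$) lie in $A$ and generate $A$. $\mathrm{syl}(g)$ is the least $n$ such that $g=({}^{a_0}b_0)\cdots({}^{a_{n-1}}b_{n-1})a_n$ with $a_i\in A$, $b_i\in B$. For $x\in X$ let $\mathrm{mp}_A(0,x)=\{c\in A:0.c=x\}$, and for $a\in A$ let $\mathfrak C(a,x)=\{cac^{-1}: c\in\mathrm{mp}_A(0,x)\}$. *)

(* Defs.v *)
(* Automorphisms of the rooted tree X^* for an arbitrary
   (possibly infinite) alphabet X : Type, with right action v.g = fwd g v. *)
From mathcomp Require Import all_boot all_order all_algebra.
Set Implicit Arguments. Unset Strict Implicit. Unset Printing Implicit Defensive.

Section TreeAut.
Variable X : Type.

Record aut := Aut {
  fwd : seq X -> seq X;
  bwd : seq X -> seq X;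
  fwdK : cancel fwd bwd;
  bwdK : cancel bwd fwd;
  fwd_size : forall v, size (fwd v) = size v;
  fwd_pre : forall u v, take (size u) (fwd (u ++ v)) = fwd u }.

Lemma pre_cat (g : aut) u v :
  fwd g (u ++ v) = fwd g u ++ drop (size u) (fwd g (u ++ v)).
Proof. by rewrite -{1}(cat_take_drop (size u) (fwd g (u ++ v))) fwd_pre. Qed.

Lemma bwd_size (g : aut) w : size (bwd g w) = size w.
Proof. by rewrite -{2}(bwdK g w) fwd_size. Qed.

Lemma bwd_pre (g : aut) u v : take (size u) (bwd g (u ++ v)) = bwd g u.
Proof.
set t := bwd g (u ++ v).
have st : size (take (size u) t) = size u.
  by rewrite size_takel // /t bwd_size size_cat leq_addr.
have := fwd_pre g (take (size u) t) (drop (size u) t).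
rewrite cat_take_drop st /t bwdK take_size_cat // => h.
by apply: (can_inj (fwdK g)); rewrite bwdK -h.
Qed.

Lemma bwd_cat (g : aut) u v :
  bwd g (u ++ v) = bwd g u ++ drop (size u) (bwd g (u ++ v)).
Proof. by rewrite -{1}(cat_take_drop (size u) (bwd g (u ++ v))) bwd_pre. Qed.

(* product gh = first g, then h *)
Definition autmul (g h : aut) : aut.
Proof.
refine (@Aut (fun v => fwd h (fwd g v)) (fun w => bwd g (bwd h w)) _ _ _ _).
- by move=> v; rewrite !fwdK.
- by move=> v; rewrite !bwdK.
- by move=> v; rewrite !fwd_size.
- move=> u v; rewrite pre_cat -(fwd_size g u) fwd_pre //.
Defined.

Definition autinv (g : aut) : aut :=
  @Aut (bwd g) (fwd g) (bwdK g) (fwdK g) (@bwd_size g) (@bwd_pre g).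

Definition aut1 : aut.
Proof.
refine (@Aut id id (fun _ => erefl) (fun _ => erefl) (fun _ => erefl) _).
by move=> u v; rewrite take_size_cat.
Defined.

(* the section g|_u, defined by (u ++ v).g = u.g ++ v.(g|_u) *)
Definition section (g : aut) (u : seq X) : aut.
Proof.
refine (@Aut (fun v => drop (size u) (fwd g (u ++ v)))
             (fun w => drop (size u) (bwd g (fwd g u ++ w))) _ _ _ _).
- by move=> v /=; rewrite -pre_cat fwdK drop_size_cat.
- move=> w /=.
  have e : u ++ drop (size u) (bwd g (fwd g u ++ w)) = bwd g (fwd g u ++ w).
    by rewrite [RHS]bwd_cat fwdK fwd_size.
  by rewrite e bwdK drop_size_cat // fwd_size.
- by move=> v; rewrite size_drop fwd_size size_cat addKn.
- move=> v w /=; rewrite catA take_drop -(fwd_pre g (u ++ v) w) size_cat addnC.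
  by [].
Defined.

Definition expn (g : aut) (n : nat) : aut := iter n (autmul g) aut1.
Definition zpow (g : aut) (k : int) : aut :=
  match k with Posz m => expn g m | Negz m => autinv (expn g m.+1) end.

Definition conj (h g : aut) : aut := autmul (autmul h g) (autinv h).

Definition lact (g : aut) (y : X) : X := head y (fwd g [:: y]).

Definition orbit_len (g : aut) (v : seq X) (l : nat) : Prop :=
  [/\ 0 < l, fwd (expn g l) v = v &
      forall k, 0 < k < l -> fwd (expn g k) v <> v].

(* g||_x := g^{l_g(x)}|_x, where l = l_g(x) *)
Definition stab_section (g : aut) (x : X) (l : nat) : aut :=
  section (expn g l) [:: x].

Inductive gen (S : aut -> Prop) : aut -> Prop :=
| gen_one : gen S aut1
| gen_base g : S g -> gen S g
| gen_mul g h : gen S g -> gen S h -> gen S (autmul g h)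
| gen_inv g : gen S g -> gen S (autinv g).

Definition subgroup (H : aut -> Prop) : Prop :=
  [/\ H aut1, forall g h, H g -> H h -> H (autmul g h) & forall g, H g -> H (autinv g)].

(* rooted automorphisms = elements of Sym(X) *)
Definition rooted (g : aut) : Prop :=
  forall y v, fwd g (y :: v) = fwd g [:: y] ++ v.

Definition in_St1 (g : aut) : Prop := forall y, fwd g [:: y] = [:: y].

(* constant spinal group data (A, B) with distinguished letter x0 *)
Definition CS (x0 : X) (A B : aut -> Prop) : Prop :=
  [/\ subgroup A, (forall a, A a -> rooted a) &
      (forall y z, exists a, A a /\ lact a y = z)] /\
  [/\ subgroup B, (forall b, B b -> in_St1 b) &
      (forall b, B b -> section b [:: x0] = b)] /\
  (forall b y, B b -> y <> x0 -> A (section b [:: y])) /\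
  (forall a, A a <-> gen (fun c => exists b y, [/\ B b, y <> x0 &
                                        c = section b [:: y]]) a).

Definition syl_expr (sa sb : seq aut) (an : aut) : aut :=
  foldr (fun ab acc => autmul (conj ab.1 ab.2) acc) an (zip sa sb).

Definition has_syl_expr (A B : aut -> Prop) (h : aut) (n : nat) : Prop :=
  exists sa sb an, [/\ size sa = n, size sb = n,
    (forall i, i < n -> A (nth aut1 sa i)) /\
    (forall i, i < n -> B (nth aut1 sb i)), A an & h = syl_expr sa sb an].

Definition syl (A B : aut -> Prop) (h : aut) (n : nat) : Prop :=
  has_syl_expr A B h n /\ forall m, m < n -> ~ has_syl_expr A B h m.

Definition mp (A : aut -> Prop) (x0 x : X) (c : aut) : Prop :=
  A c /\ lact c x0 = x.
Definition frakC (A : aut -> Prop) (x0 : X) (a : aut) (x : X) (z : aut) : Prop :=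
  exists c, mp A x0 x c /\ z = autmul (autmul c a) (autinv c).

End TreeAut.

Arguments aut1 {X}.

(* Main.v *)
Require Import Defs.
From mathcomp Require Import all_boot all_order all_algebra.
From mathcomp Require Import zify.
From Stdlib Require Import FunctionalExtensionality ProofIrrelevance ClassicalEpsilon.
Set Implicit Arguments. Unset Strict Implicit. Unset Printing Implicit Defensive.

Section Aux.
Variable X : Type.
Implicit Types g h a b : aut X.

Lemma aut_ext g h : fwd g =1 fwd h -> g = h.
Proof.
case: g h => f1 b1 p1 q1 r1 s1 [f2 b2 p2 q2 r2 s2] /= E.
have ef := functional_extensionality _ _ E; subst f2.
have eb : b1 = b2.
  apply: functional_extensionality => w.
  by rewrite -[w in b1 w](q2 w) p1.
subst b2; f_equal; apply: proof_irrelevance.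
Qed.

Lemma fwd1 g y : fwd g [:: y] = [:: lact g y].
Proof.
rewrite /lact; have := fwd_size g [:: y].
by case: (fwd g [:: y]) => [|z [|]].
Qed.

Lemma fwd_cons g y v : fwd g (y :: v) = lact g y :: fwd (section g [:: y]) v.
Proof. by rewrite -[y :: v]/([:: y] ++ v) (pre_cat g [:: y] v) fwd1. Qed.

Lemma lact_mul g h y : lact (autmul g h) y = lact h (lact g y).
Proof. by rewrite /lact /= fwd1 fwd1. Qed.

Lemma lactK g y : lact (autinv g) (lact g y) = y.
Proof. by rewrite /lact /= fwd1 -(fwd1 g) fwdK. Qed.

Lemma lactVK g y : lact g (lact (autinv g) y) = y.
Proof. by rewrite /lact /= -[bwd g _]/(fwd (autinv g) _) fwd1 -(fwd1 (autinv g)) /= bwdK. Qed.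

Lemma lact_inj g y z : lact g y = lact g z -> y = z.
Proof. by move=> e; rewrite -(lactK g y) e lactK. Qed.

Lemma section_mul g h y :
  section (autmul g h) [:: y] = autmul (section g [:: y]) (section h [:: lact g y]).
Proof.
apply: aut_ext => v /=.
by rewrite fwd_cons /= !drop0 fwd_cons /= drop0.
Qed.

Lemma mulA g h k : autmul (autmul g h) k = autmul g (autmul h k).
Proof. by apply: aut_ext. Qed.
Lemma mul1g g : autmul aut1 g = g.
Proof. by apply: aut_ext. Qed.
Lemma mulg1 g : autmul g aut1 = g.
Proof. by apply: aut_ext. Qed.

Lemma rooted_section a y : rooted a -> section a [:: y] = aut1.
Proof.
move=> ra; apply: aut_ext => v /=.
by rewrite ra drop_size_cat // fwd1.
Qed.

Lemma rooted_inv a : rooted a -> rooted (autinv a).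
Proof.
move=> ra y v /=.
have e : bwd a [:: y] = [:: lact (autinv a) y] by exact: (fwd1 (autinv a)).
apply: (can_inj (fwdK a)); rewrite bwdK e /= ra -e bwdK //.
Qed.

Lemma St1_lact b y : in_St1 b -> lact b y = y.
Proof. by move=> hb; rewrite /lact hb. Qed.

Lemma conj_section a b y : rooted a -> in_St1 b ->
  section (Defs.conj a b) [:: y] = section b [:: lact a y].
Proof.
move=> ra hb; have ri := rooted_inv ra.
rewrite /Defs.conj !section_mul (rooted_section _ ra) (rooted_section _ ri).
by rewrite mul1g mulg1.
Qed.

Lemma conj_lact a b y : in_St1 b -> lact (Defs.conj a b) y = y.
Proof. by move=> hb; rewrite /Defs.conj !lact_mul (St1_lact _ hb) lactK. Qed.

Lemma fwd_expn g k v : fwd (Defs.expn g k) v = iter k (fwd g) v.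
Proof. by elim: k v => [|k IH] v //=; rewrite IH -iterSr. Qed.

Lemma lact_expn g k y : lact (Defs.expn g k) y = iter k (lact g) y.
Proof.
elim: k y => [|k IH] y //. 
by rewrite /Defs.expn iterS -/(Defs.expn g k) lact_mul IH -iterSr.
Qed.


Definition prodl (s : seq (aut X)) := foldr (@autmul X) aut1 s.

Lemma prod_cat s t : prodl (s ++ t) = autmul (prodl s) (prodl t).
Proof. by elim: s => [|a s IH] /=; rewrite ?mul1g // IH mulA. Qed.

Lemma prod_flatten ss : prodl (flatten ss) = prodl (map prodl ss).
Proof. by elim: ss => [|s ss IH] //=; rewrite prod_cat IH. Qed.

Lemma map_iota1 (T : Type) (F : nat -> T) n :
  [seq F i | i <- iota 1 n] = [seq F i.+1 | i <- iota 0 n].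
Proof. by rewrite (iotaDl 1 0) -map_comp. Qed.

Lemma syl_lact (sa sb : seq (aut X)) (an : aut X) (y : X) : size sa = size sb ->
  (forall i, i < size sb -> in_St1 (nth aut1 sb i)) ->
  lact (syl_expr sa sb an) y = lact an y.
Proof.
elim: sa sb => [|a sa IH] [|b sb] //= => -[e] hb.
rewrite lact_mul conj_lact; last exact: (hb 0).
by apply: IH => // i hi; apply: (hb i.+1).
Qed.

Lemma syl_section (sa sb : seq (aut X)) (an : aut X) (y : X) : size sa = size sb ->
  (forall i, i < size sa -> rooted (nth aut1 sa i)) ->
  (forall i, i < size sb -> in_St1 (nth aut1 sb i)) -> rooted an ->
  section (syl_expr sa sb an) [:: y] =
  prodl [seq section (nth aut1 sb i) [:: lact (nth aut1 sa i) y] | i <- iota 0 (size sa)].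
Proof.
move=> + + + ran; elim: sa sb => [|a sa IH] [|b sb] //=.
  by move=> _ _ _; rewrite rooted_section.
move=> -[e] ha hb.
rewrite section_mul conj_section; [|exact: (ha 0)|exact: (hb 0)].
rewrite conj_lact; last exact: (hb 0).
rewrite IH // ?map_iota1 //.
- by move=> i hi; apply: (ha i.+1).
- by move=> i hi; apply: (hb i.+1).
Qed.

Lemma section_expn g l (x : X) : section (Defs.expn g l) [:: x] =
  prodl [seq section g [:: iter j (lact g) x] | j <- iota 0 l].
Proof.
elim: l x => [|l IH] x.
  by apply: aut_ext => v; rewrite /= drop0.
have -> : Defs.expn g l.+1 = autmul g (Defs.expn g l) by [].
rewrite section_mul IH /= map_iota1.
congr (autmul _ (prodl _)); apply: eq_map => j; by rewrite iterSr.
Qed.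

Lemma syl_cons (a b an : aut X) sa sb :
  syl_expr (a :: sa) (b :: sb) an = autmul (Defs.conj a b) (syl_expr sa sb an).
Proof. by []. Qed.

Lemma conj1 (t : aut X) : Defs.conj aut1 t = t.
Proof. by apply: aut_ext. Qed.

Lemma mul_syl (t : aut X) (sa sb : seq (aut X)) (an : aut X) : autmul t (syl_expr sa sb an) =
  syl_expr [seq autmul t a | a <- sa] sb (autmul t an).
Proof.
elim: sa sb => [|a sa IH] [|b sb] //=.
rewrite !syl_cons -IH; apply: aut_ext => v /=; by rewrite bwdK.
Qed.

Fixpoint okL (A B : aut X -> Prop) (L : seq (bool * aut X)) : Prop :=
  match L with
  | [::] => True
  | p :: L' => (if p.1 then B p.2 else A p.2) /\ okL A B L'
  end.

Lemma prod_syl (A B : aut X -> Prop) L : subgroup A -> okL A B L ->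
  has_syl_expr A B (prodl (map snd L)) (count fst L).
Proof.
case=> A1 AM AV; elim: L => [|[[] t] L IH] /= .
  move=> _; exists [::], [::], aut1; split => //; split => //.
- move=> [Bt /IH [sa [sb [an [e1 e2 [hA hB] hAn ->]]]]].
  exists (aut1 :: sa), (t :: sb), an; split => //=; try by rewrite ?e1 ?e2.
    split => [[|i]|[|i]] //= hi; [exact: hA|exact: hB].
  by rewrite syl_cons conj1.
- move=> [At /IH [sa [sb [an [e1 e2 [hA hB] hAn ->]]]]].
  exists [seq autmul t a | a <- sa], sb, (autmul t an); split => //=.
  + by rewrite size_map.
  + split => // i hi; rewrite (nth_map aut1) ?e1 //; apply: AM => //; exact: hA.
  + by apply: AM.
  + by rewrite mul_syl.
Qed.


Lemma okL_cat A B L1 L2 : okL A B L1 -> okL A B L2 -> okL A B (L1 ++ L2).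
Proof. by elim: L1 => [|p L1 IH] //= [h1 h2] h; split => //; apply: IH. Qed.

Lemma okL_flat A B (s : seq nat) F : (forall j, j \in s -> okL A B (F j)) ->
  okL A B (flatten (map F s)).
Proof.
elim: s => [|j s IH] //= h; apply: okL_cat; first by apply: h; rewrite inE eqxx.
by apply: IH => k hk; apply: h; rewrite inE hk orbT.
Qed.

Lemma okL_map A B (s : seq nat) (G : nat -> bool * aut X) :
  (forall i, i \in s -> if (G i).1 then B (G i).2 else A (G i).2) ->
  okL A B (map G s).
Proof.
elim: s => [|i s IH] //= h; split; first by apply: h; rewrite inE eqxx.
by apply: IH => k hk; apply: h; rewrite inE hk orbT.
Qed.

End Aux.

Lemma sum_le1 (b : nat -> bool) l :
  (forall j1 j2, j1 < l -> j2 < l -> b j1 -> b j2 -> j1 = j2) ->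
  \sum_(0 <= j < l) b j <= 1.
Proof.
elim: l => [|l IH] h; first by rewrite big_geq.
rewrite big_nat_recr //=.
case bl: (b l).
  rewrite big1_seq ?add0n // => j /andP [_]; rewrite mem_index_iota => /andP [_ hj].
  case bj: (b j) => //.
  have := h j l (ltnW hj) (leqnn _) bj bl.
  by move=> e; rewrite e ltnn in hj.
rewrite addn0; apply: IH => j1 j2 h1 h2; apply: h; exact: ltnW.
Qed.

Lemma sum_lt (c : nat -> nat) n i0 : (forall i, i < n -> c i <= 1) ->
  i0 < n -> c i0 = 0 -> \sum_(0 <= i < n) c i < n.
Proof.
have sle : forall m, (forall i, i < m -> c i <= 1) -> \sum_(0 <= i < m) c i <= m.
  elim=> [|m IH] h; first by rewrite big_geq.
  rewrite big_nat_recr //= -addn1 leq_add //; first by apply: IH => i hi; apply: h; exact: ltnW.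
  exact: h.
elim: n => [|n IH] // h hi0 hc.
rewrite big_nat_recr //=.
have h' : forall i, i < n -> c i <= 1 by move=> i hi; apply: h; exact: ltnW.
case: (ltngtP i0 n) => [lt| gt | eq].
- have := IH h' lt hc; have := h n (leqnn _); lia.
- by rewrite ltnS leqNgt gt in hi0.
- subst i0; rewrite hc addn0 ltnS; exact: sle.
Qed.

Definition asb (P : Prop) : bool :=
  if excluded_middle_informative P then true else false.

Lemma asbP (P : Prop) : (P /\ asb P = true) \/ (~ P /\ asb P = false).
Proof. by rewrite /asb; case: excluded_middle_informative => h; [left|right]. Qed.

Lemma cnt_sum (s : seq nat) (p : nat -> bool) : count p s = \sum_(i <- s) p i.
Proof. by elim: s => [|a s IH] /=; rewrite ?big_nil ?big_cons ?IH. Qed.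

Lemma ii0 k : iota 0 k = index_iota 0 k.
Proof. by rewrite /index_iota subn0. Qed.

Theorem mainTheorem7 (X : Type) (x0 : X) (A B : aut X -> Prop)
  (hCS : CS x0 A B)
  (n : nat) (sa sb : seq (aut X)) (an : aut X)
  (hsa : size sa = n) (hsb : size sb = n)
  (hA : forall i, (i < n)%N -> A (nth aut1 sa i))
  (hB : forall i, (i < n)%N -> B (nth aut1 sb i))
  (hAn : A an)
  (g : aut X) (hg : g = syl_expr sa sb an)
  (x : X) (l : nat) (hl : orbit_len g [:: x] l)
  (hsylx : syl A B (stab_section g x l) n)
  (hsylg : syl A B g n) :
  (forall i, (i < n)%N ->
     frakC A x0 an x (autmul (autmul (autinv (nth aut1 sa i)) an) (nth aut1 sa i))) /\
  exists jf : nat -> int,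
    stab_section g x l =
    foldr (@autmul X) aut1
      (flatten [seq [seq section (nth aut1 sb i)
                        [:: lact (autmul (autmul (autinv (nth aut1 sa i))
                                           (zpow an (Posz j + jf i)%R))
                                      (nth aut1 sa i)) x0]
                    | i <- iota 0 n]
               | j <- iota 0 l]).
Proof.
case: hCS => [[[A1 AM AV] Aroot _] [[_ BSt Bsec] [Bsy _]]].
have sgA : subgroup A by split.
have ra : forall i, i < size sa -> rooted (nth aut1 sa i).
  by move=> i; rewrite hsa => hi; apply: Aroot; apply: hA.
have rb : forall i, i < size sb -> in_St1 (nth aut1 sb i).
  by move=> i; rewrite hsb => hi; apply: BSt; apply: hB.
have ran := Aroot _ hAn.
have Aexp : forall k, A (Defs.expn an k).
  by elim=> [|k IH] //; apply: AM.
have hlg : forall y, lact g y = lact an y.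
  by move=> y; rewrite hg syl_lact // hsa hsb.
have hsec : forall y, section g [:: y] = prodl
    [seq section (nth aut1 sb i) [:: lact (nth aut1 sa i) y] | i <- iota 0 n].
  move=> y; rewrite hg (syl_section _ _ ra rb ran) ?hsa //; by rewrite hsb.
have hiter : forall j y, iter j (lact g) y = iter j (lact an) y.
  by move=> j y; apply: eq_iter.
case: hl => l0 hxl hmin.
have hx : iter l (lact an) x = x.
  by move: hxl; rewrite fwd1 lact_expn hiter => -[].
have iterinj : forall j, injective (iter j (lact an)).
  elim=> [|j IH] y z //= e; apply: IH; exact: lact_inj e.
have key : forall j1 j2, j1 < j2 -> j2 < l ->
    iter j1 (lact an) x = iter j2 (lact an) x -> False.
  move=> j1 j2 lt12 lt2 e.
  have ek : iter (j2 - j1) (lact an) x = x.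
    apply: (iterinj j1); rewrite -iterD subnKC ?e //; exact: ltnW.
  apply: (hmin (j2 - j1)).
    by apply/andP; split; [rewrite subn_gt0|apply: leq_ltn_trans (leq_subr _ _) lt2].
  by rewrite fwd1 lact_expn hiter ek.
have hdist : forall j1 j2, j1 < l -> j2 < l ->
    iter j1 (lact an) x = iter j2 (lact an) x -> j1 = j2.
  move=> j1 j2 h1 h2 e; case: (ltngtP j1 j2) => // lt.
  - by case: (key _ _ lt h2 e).
  - by case: (key _ _ lt h1 (esym e)).
have stab : stab_section g x l = prodl (flatten
    [seq [seq section (nth aut1 sb i) [:: lact (nth aut1 sa i) (iter j (lact an) x)]
         | i <- iota 0 n] | j <- iota 0 l]).
  rewrite /stab_section section_expn prod_flatten -map_comp; congr prodl.
  by apply: eq_map => j /=; rewrite hsec hiter.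
have hex : forall i, i < n ->
    exists j, j < l /\ lact (nth aut1 sa i) (iter j (lact an) x) = x0.
  move=> i0 hi0; apply: NNPP => hne.
  pose tag j i := asb (lact (nth aut1 sa i) (iter j (lact an) x) = x0).
  pose P := flatten [seq [seq (tag j i, section (nth aut1 sb i)
                  [:: lact (nth aut1 sa i) (iter j (lact an) x)]) | i <- iota 0 n]
                  | j <- iota 0 l].
  have tagP : forall j i,
      (lact (nth aut1 sa i) (iter j (lact an) x) = x0 /\ tag j i = true) \/
      (lact (nth aut1 sa i) (iter j (lact an) x) <> x0 /\ tag j i = false).
    by move=> j i; exact: asbP.
  have okP : okL A B P.
    apply: okL_flat => j hj; apply: okL_map => i; rewrite mem_iota add0n => /andP [_ hi] /=.
    case: (tagP j i) => -[h ->].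
      by rewrite h Bsec; apply: hB.
    by apply: Bsy => //; apply: hB.
  have e1 : map snd P = flatten
    [seq [seq section (nth aut1 sb i) [:: lact (nth aut1 sa i) (iter j (lact an) x)]
         | i <- iota 0 n] | j <- iota 0 l].
    rewrite /P map_flatten -map_comp; congr flatten; apply: eq_map => j /=.
    by rewrite -map_comp.
  have := prod_syl sgA okP; rewrite e1 -stab => hs.
  apply: (hsylx.2 _ _ hs).
  rewrite /P count_flatten -map_comp sumnE big_map.
  under eq_bigr => j _ do rewrite /= count_map cnt_sum.
  rewrite exchange_big /= !ii0.
  apply: (sum_lt (c := fun i => \sum_(0 <= j < l) tag j i) _ hi0).
  - move=> i hi; apply: sum_le1 => j1 j2 h1 h2.
    case: (tagP j1 i) => -[p1 ->] //; case: (tagP j2 i) => -[p2 ->] // _ _.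
    apply: hdist => //; apply: (lact_inj (g := nth aut1 sa i)); by rewrite p1 p2.
  - apply: big1_seq => j /andP [_]; rewrite mem_index_iota => /andP [_ hj].
    case: (tagP j i0) => -[p ->] //; case: hne; by exists j.
have hex' : forall i, exists j, i < n ->
    j < l /\ lact (nth aut1 sa i) (iter j (lact an) x) = x0.
  move=> i; case: (ltnP i n) => hi; last by exists 0.
  by have [j hj] := hex i hi; exists j.
pose J i := proj1_sig (constructive_indefinite_description _ (hex' i)).
have hJ : forall i, i < n ->
    J i < l /\ lact (nth aut1 sa i) (iter (J i) (lact an) x) = x0.
  by move=> i hi; exact: (proj2_sig (constructive_indefinite_description _ (hex' i)) hi).
have hJinv : forall i, i < n ->
    lact (autinv (nth aut1 sa i)) x0 = iter (J i) (lact an) x.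
  by move=> i hi; rewrite -(hJ i hi).2 lactK.
split.
- move=> i hi.
  exists (autmul (autinv (nth aut1 sa i)) (Defs.expn an (l - J i))); split.
    split; first by apply: AM; [apply: AV; apply: hA|apply: Aexp].
    rewrite lact_mul lact_expn hJinv // -iterD subnK ?hx //; exact: ltnW (hJ i hi).1.
  have comm : forall u, fwd an (fwd (Defs.expn an (l - J i)) u) =
                        fwd (Defs.expn an (l - J i)) (fwd an u).
    by move=> u; rewrite !fwd_expn -iterS iterSr.
  apply: aut_ext => v /=; by rewrite comm fwdK.
- exists (fun i => Posz (l - J i)).
  rewrite stab; congr prodl; congr flatten.
  apply/eq_in_map => j; rewrite mem_iota add0n => /andP [_ hj].
  apply/eq_in_map => i; rewrite mem_iota add0n => /andP [_ hi].
  rewrite -PoszD /= !lact_mul lact_expn hJinv // -iterD -addnA subnK; last exact: ltnW (hJ i hi).1.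
  by rewrite iterD hx.
Qed.
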